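(* For all $k\geq 0,l\geq 1$ and $k+l$ even, one has \[\langle T_{k,l}\rangle_q = \begin{cases} D^{l-1}G_{k-l+2} & \text{if } k-l\geq 0, \\ D^k G_{l-k} & \text{if } k-l\leq 2.\end{cases}\]
   Context: $\mathscr{P}$ is the set of partitions, $r_m(\lambda)$ the number of parts of $\lambda$ equal to $m$, and $\langle f\rangle_q=\sum_\lambda f(\lambda)q^{|\lambda|}/\sum_\lambda q^{|\lambda|}$. The Faulhaber polynomial $F_l$ is the polynomial with zero constant term with $F_l(n)=\sum_{i=1}^n i^{l-1}$ for $n\ge1$. $T_{k,l}(\lambda)=-\frac{B_{k+l}}{2(k+l)}(\delta_{l,1}+\delta_{k,0})+\sum_{m\ge1}m^kF_l(r_m(\lambda))$; equivalently, with $c_i(\lambda)=\#\{j\le i\mid\lambda_j=\lambda_i\}$, $T_{k,l}(\lambda)=-\frac{B_{k+l}}{2(k+l)}(\delta_{l,1}+\delta_{k,0})+\sum_i\lambda_i^kc_i(\lambda)^{l-1}$. $G_k=-\frac{B_k}{2k}+\sum_{r,m\ge1}m^{k-1}q^{mr}$ are the Eisenstein series and $D=q\frac{d}{dq}$. *)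

(* Defs.v *)
From HB Require Import structures.
From mathcomp Require Import all_boot all_order all_algebra.
Set Implicit Arguments. Unset Strict Implicit. Unset Printing Implicit Defensive.
Import Order.TTheory GRing.Theory Num.Theory.
Local Open Scope ring_scope.

(* Formal power series in q with rational coefficients: coefficient sequences. *)
Definition series := nat -> rat.

Definition smul (a b : series) : series :=
  fun n => \sum_(i < n.+1) a i * b (n - i)%N.

(* Coefficients 0..n of the multiplicative inverse of a series (a 0 <> 0). *)
Fixpoint sinv_list (a : series) (n : nat) : seq rat :=
  match n with
  | 0 => [:: (a 0%N)^-1]
  | m.+1 => let s := sinv_list a m in
      rcons s (- (a 0%N)^-1 * \sum_(i < m.+1) a i.+1 * nth 0 s (m - i)%N)
  end.
Definition sinv (a : series) : series := fun n => nth 0 (sinv_list a n) n.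

(* Partitions of n are encoded by their multiplicity functions:
   r : {ffun 'I_n -> 'I_n.+1}, with r i = r_{i+1}(lambda) (number of parts
   equal to i+1), subject to sum_m m r_m = n.  Parts larger than n cannot occur. *)
Definition is_part (n : nat) (r : {ffun 'I_n -> 'I_n.+1}) : bool :=
  (\sum_(i < n) i.+1 * r i)%N == n.

Definition pgen (f : forall n, {ffun 'I_n -> 'I_n.+1} -> rat) : series :=
  fun n => \sum_(r : {ffun 'I_n -> 'I_n.+1} | is_part r) f n r.

(* <f>_q = (sum_lambda f(lambda) q^|lambda|) / (sum_lambda q^|lambda|). *)
Definition qbracket (f : forall n, {ffun 'I_n -> 'I_n.+1} -> rat) : series :=
  smul (pgen f) (sinv (pgen (fun _ _ => 1))).

(* Bernoulli numbers, B_0 = 1, sum_{j=0}^{m} C(m+1,j) B_j = 0 for m >= 1. *)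
Fixpoint bern_list (n : nat) : seq rat :=
  match n with
  | 0 => [:: 1]
  | m.+1 => let s := bern_list m in
      rcons s (- (m.+2%:R)^-1 * \sum_(j < m.+1) 'C(m.+2, j)%:R * nth 0 s j)
  end.
Definition bernoulli (n : nat) : rat := nth 0 (bern_list n) n.

(* Faulhaber polynomial evaluated at a natural number r: sum_{i=1}^r i^(l-1)
   (equals 0 at r = 0 since F_l has zero constant term). *)
Definition faulhaber (l r : nat) : rat := (\sum_(1 <= i < r.+1) i ^ (l - 1))%:R.

Definition kron (a b : nat) : rat := (a == b)%:R.

Definition Tkl (k l : nat) (n : nat) (r : {ffun 'I_n -> 'I_n.+1}) : rat :=
  - bernoulli (k + l) / (2 * (k + l)%:R) * (kron l 1 + kron k 0)
  + \sum_(i < n) (i.+1 ^ k)%:R * faulhaber l (r i).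

Definition eisenstein (k : nat) : series :=
  fun n => if n is 0 then - bernoulli k / (2 * k%:R)
           else (\sum_(1 <= m < n.+1 | (m %| n)%N) m ^ (k - 1))%:R.

(* D = q d/dq, iterated j times. *)
Definition Dpow (j : nat) (a : series) : series := fun n => (n ^ j)%:R * a n.

(* Main.v *)
Require Import Defs.
From mathcomp Require Import all_boot all_order all_algebra.
From mathcomp Require Import ring lra zify.
Set Implicit Arguments. Unset Strict Implicit. Unset Printing Implicit Defensive.
Import Order.TTheory GRing.Theory Num.Theory.
Local Open Scope ring_scope.


Definition eqN (N : nat) (p q : {poly rat}) := forall j, (j <= N)%N -> p`_j = q`_j.

Lemma eqN_refl N p : eqN N p p. Proof. by []. Qed.
Lemma eqN_sym N p q : eqN N p q -> eqN N q p. Proof. by move=> h j hj; rewrite h. Qed.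
Lemma eqN_trans N p q r : eqN N p q -> eqN N q r -> eqN N p r.
Proof. by move=> h1 h2 j hj; rewrite h1 // h2. Qed.
Lemma eqN_le N M p q : (M <= N)%N -> eqN N p q -> eqN M p q.
Proof. by move=> hM h j hj; apply: h; apply: leq_trans hM. Qed.

Lemma eqN_mul N p p' q q' : eqN N p p' -> eqN N q q' -> eqN N (p * q) (p' * q').
Proof.
move=> h1 h2 j hj; rewrite !coefM; apply: eq_bigr => i _.
rewrite h1; last by apply: leq_trans hj; rewrite -ltnS.
by rewrite h2 // (leq_trans (leq_subr _ _) hj).
Qed.

Lemma eqN_add N p p' q q' : eqN N p p' -> eqN N q q' -> eqN N (p + q) (p' + q').
Proof. by move=> h1 h2 j hj; rewrite !coefD h1 // h2. Qed.

Lemma eqN_prod N (I : Type) (r : seq I) (P : pred I) (F G : I -> {poly rat}) :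
  (forall i, P i -> eqN N (F i) (G i)) ->
  eqN N (\prod_(i <- r | P i) F i) (\prod_(i <- r | P i) G i).
Proof.
move=> h; apply: (big_ind2 (eqN N)) => //; last by move=> *; apply: eqN_mul.
Qed.

Lemma eqN_sum N (I : Type) (r : seq I) (P : pred I) (F G : I -> {poly rat}) :
  (forall i, P i -> eqN N (F i) (G i)) ->
  eqN N (\sum_(i <- r | P i) F i) (\sum_(i <- r | P i) G i).
Proof.
move=> h; apply: (big_ind2 (eqN N)) => //; last by move=> *; apply: eqN_add.
Qed.


Lemma eqN_XnM N M p q : (N < M)%N -> eqN N (q + 'X^M * p) q.
Proof.
move=> hM j hj; rewrite coefD coefXnM.
have -> : (j < M)%N by lia.
by rewrite addr0.
Qed.

Definition PolyN (N : nat) (a : series) : {poly rat} := \poly_(i < N.+1) a i.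

Lemma smul_coef N a b j : (j <= N)%N -> smul a b j = (PolyN N a * PolyN N b)`_j.
Proof.
move=> hj; rewrite coefM /smul; apply: eq_bigr => i _.
rewrite !coef_poly.
have hi : (i < N.+1)%N by have := ltn_ord i; lia.
have hi' : (j - i < N.+1)%N by rewrite ltnS (leq_trans (leq_subr _ _) hj).
by rewrite hi hi'.
Qed.

Lemma smul_ext a a' b b' n : (forall i, (i <= n)%N -> a i = a' i) ->
  (forall i, (i <= n)%N -> b i = b' i) -> smul a b n = smul a' b' n.
Proof.
move=> h1 h2; apply: eq_bigr => i _.
have hi : (i <= n)%N by rewrite -ltnS.
by rewrite h1 // h2 // leq_subr.
Qed.

Lemma size_sinv_list a m : size (sinv_list a m) = m.+1.
Proof. by elim: m => //= m ih; rewrite size_rcons ih. Qed.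

Lemma sinv_listE a m j : (j <= m)%N -> nth 0 (sinv_list a m) j = sinv a j.
Proof.
elim: m => [|m ih] hj; first by move: hj; rewrite leqn0 => /eqP ->.
rewrite leq_eqVlt in hj; case/orP: hj => [/eqP -> //|hj].
by rewrite /= nth_rcons size_sinv_list hj ih.
Qed.

Lemma sinvS a m : sinv a m.+1 =
  - (a 0%N)^-1 * \sum_(i < m.+1) a i.+1 * sinv a (m - i)%N.
Proof.
rewrite {1}/sinv /= nth_rcons size_sinv_list ltnn eqxx.
congr (_ * _); apply: eq_bigr => i _; by rewrite sinv_listE // leq_subr.
Qed.

Lemma smul_sinv a n : a 0%N != 0 -> smul a (sinv a) n = (n == 0%N)%:R.
Proof.
move=> ha; case: n => [|m].
  by rewrite /smul big_ord1 /sinv /= mulfV.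
rewrite /smul big_ord_recl subn0 sinvS /=.
rewrite mulrA mulrN mulfV // mulN1r.
under [X in _ + X]eq_bigr => i _ do rewrite /bump /= add1n subSS.
by rewrite addNr.
Qed.


Section Tele.
Variable R : comNzRingType.
Definition gS (w : nat -> R) c := \sum_(1 <= t < c.+1) w t.
Definition Spol N (w : nat -> R) (y : R) := \sum_(c < N.+1) gS w c * y ^+ c.
Definition Gpol N (y : R) := \sum_(c < N.+1) y ^+ c.
Definition Wpol N (w : nat -> R) (y : R) := \sum_(1 <= t < N.+1) w t * y ^+ t.

Lemma teleS N w y : (1 - y) * Spol N w y = Wpol N w y - gS w N * y ^+ N.+1.
Proof.
elim: N => [|N ih].
  by rewrite /Spol /Wpol /gS big_ord1 !big_geq // !mul0r mulr0 subr0.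
have hW : Wpol N.+1 w y = Wpol N w y + w N.+1 * y^+N.+1 by rewrite /Wpol big_nat_recr.
have hg : gS w N.+1 = gS w N + w N.+1 by rewrite /gS big_nat_recr.
rewrite /Spol big_ord_recr /= -/(Spol N w y) mulrDr ih hW hg.
rewrite !exprS; ring.
Qed.

Lemma teleG N y : (1 - y) * Gpol N y = 1 - y ^+ N.+1.
Proof.
rewrite /Gpol -[1 - y]opprB mulNr -subrX1 opprB //.
Qed.

Lemma teleGW N w y : Gpol N y * Wpol N w y =
   Spol N w y + y ^+ N.+1 * (gS w N * Gpol N y - Spol N w y).
Proof.
have hW : Wpol N w y = (1 - y) * Spol N w y + gS w N * y ^+ N.+1.
  by rewrite teleS subrK.
rewrite hW mulrDr (mulrA (Gpol N y) (1-y)) (mulrC (Gpol N y) (1-y)) teleG; ring.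
Qed.
End Tele.


Lemma sum_nat_pick (F : nat -> rat) (P : nat -> bool) m n q :
  (m <= q < n)%N -> (forall t, (m <= t < n)%N -> P t = (t == q)) ->
  \sum_(m <= t < n) F t * (P t)%:R = F q.
Proof.
move=> hq hP.
rewrite (bigD1_seq q) /=; last by apply: iota_uniq.
  rewrite (hP q hq) eqxx mulr1 big1_seq ?addr0 // => t /andP[ht].
  by rewrite mem_index_iota => /hP ->; rewrite (negbTE ht) mulr0.
by rewrite mem_index_iota.
Qed.

Lemma coefG N a m : (0 < a)%N -> (m <= N)%N ->
  (Gpol N ('X^a : {poly rat}))`_m = (a %| m)%:R.
Proof.
move=> ha hm; rewrite /Gpol coef_sum.
under eq_bigr => c _ do rewrite -exprM coefXn.
case: (boolP (a %| m)%N) => [/dvdnP [q hq]|hd].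
  subst m.
  rewrite -(big_mkord xpredT (fun c => ((q * a)%N == (a * c)%N)%:R)).
  rewrite (eq_bigr (fun c => 1 * ((q * a)%N == (a * c)%N)%:R)); last by move=> *; rewrite mul1r.
  rewrite (sum_nat_pick (fun _ => 1) (q:=q)) //.
    apply/andP; split => //; rewrite ltnS; apply: leq_trans hm; by rewrite leq_pmulr.
  by move=> t _; rewrite mulnC eqn_pmul2l // eq_sym.
apply: big1 => c _; case: eqP => // e; case/negP: hd; rewrite e dvdn_mulr //.
Qed.

Definition dsum n j (F : nat -> nat -> rat) :=
  \sum_(1 <= m < n.+1) \sum_(1 <= t < n.+1) F m t * (j == m * t)%N%:R.

Lemma dsum_swap n j F : dsum n j F = dsum n j (fun t m => F m t).
Proof.
rewrite /dsum exchange_big /=; apply: eq_bigr => t _; apply: eq_bigr => m _.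
by rewrite mulnC.
Qed.

Lemma dsumE n j F : (1 <= j <= n)%N ->
  dsum n j F = \sum_(1 <= m < j.+1 | (m %| j)%N) F m (j %/ m)%N.
Proof.
move=> /andP[j1 jn].
rewrite /dsum.
have h : forall m, (1 <= m < n.+1)%N ->
   \sum_(1 <= t < n.+1) F m t * (j == m * t)%N%:R = if (m %| j)%N then F m (j %/ m)%N else 0.
  move=> m /andP[m1 _]; case: (boolP (m %| j)%N) => [hd|hd].
    apply: sum_nat_pick.
      apply/andP; split.
        by rewrite divn_gt0 // dvdn_leq.
      by rewrite ltnS (leq_trans (leq_div _ _) jn).
    move=> t _; rewrite -{1}(divnK hd) mulnC.
    by rewrite eqn_pmul2l // eq_sym.
  apply: big1 => t _; case: eqP => [e|]; last by rewrite mulr0.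
  by case/negP: hd; rewrite e dvdn_mulr.
rewrite big_nat_cond (eq_bigr (fun m => if (m %| j)%N then F m (j %/ m)%N else 0)); last first.
  by move=> m /andP[hm _]; rewrite h.
rewrite -big_nat_cond (big_cat_nat _ (n := j.+1)) //=.
rewrite [X in _ + X]big1_seq ?addr0; last first.
  move=> m /andP[_]; rewrite mem_index_iota => /andP[hm _].
  case: (boolP (m %| j)%N) => // hd; have := dvdn_leq j1 hd.
  by rewrite leqNgt hm.
by rewrite [RHS]big_mkcond.
Qed.


Definition wt n (r : {ffun 'I_n -> 'I_n.+1}) : nat := (\sum_(i < n) i.+1 * r i)%N.
Definition yv (i : nat) : {poly rat} := 'X ^+ i.+1.

Lemma Xwt n (r : {ffun 'I_n -> 'I_n.+1}) : 'X^(wt r) = \prod_(i < n) (yv i) ^+ (r i).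
Proof.
rewrite /wt (big_morph (fun m => 'X^m) (fun a b => exprD _ a b) (expr0 _)).
by apply: eq_bigr => i _; rewrite exprM.
Qed.

Lemma pgen_coef F n : pgen F n =
  (\sum_(r : {ffun 'I_n -> 'I_n.+1}) (F n r)%:P * \prod_(i < n) (yv i) ^+ (r i))`_n.
Proof.
rewrite coef_sum /pgen big_mkcond; apply: eq_bigr => r _.
by rewrite -Xwt coefCM coefXn /is_part -/(wt r) eq_sym; case: (_ == _); rewrite ?mulr1 ?mulr0.
Qed.

Lemma P_coef j : pgen (fun _ _ => 1) j = (\prod_(i < j) Gpol j (yv i))`_j.
Proof.
rewrite pgen_coef /Gpol bigA_distr_bigA /=.
by under eq_bigr => r _ do rewrite polyC1 mul1r.
Qed.

Lemma Q_trunc j n : (j <= n)%N ->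
  eqN j (\prod_(i < j) Gpol j (yv i)) (\prod_(i < n) Gpol n (yv i)).
Proof.
move=> hj.
rewrite (big_ord_widen n (fun i => Gpol j (yv i)) hj).
have -> : \prod_(i < n) Gpol n (yv i) = (\prod_(i < n | (i < j)%N) Gpol n (yv i)) *
   \prod_(i < n | ~~ (i < j)%N) Gpol n (yv i) by rewrite (bigID (fun i : 'I_n => (i < j)%N)).
have -> : \prod_(i < n | (i < j)%N) Gpol j (yv i) = (\prod_(i < n | (i < j)%N) Gpol j (yv i)) *
   \prod_(i < n | ~~ (i < j)%N) 1 by rewrite big1_eq mulr1.
apply: eqN_mul.
  by refine (eqN_prod _ _); move=> i hi m hm; rewrite !coefG //; lia.
refine (eqN_prod _ _); move=> i hi m hm; rewrite coefG //; last by lia.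
rewrite coef1; case: (posnP m) => [->|m0]; first by rewrite dvdn0.
case: (boolP (i.+1 %| m)%N) => // hd.
have := dvdn_leq m0 hd; rewrite -ltnNge in hi; lia.
Qed.

Lemma expand n (H : 'I_n -> nat -> rat) :
  \sum_(r : {ffun 'I_n -> 'I_n.+1}) (\sum_(i < n) H i (r i))%:P * \prod_(i < n) (yv i) ^+ (r i) =
  \sum_(i0 < n) (\sum_(c < n.+1) (H i0 c)%:P * (yv i0) ^+ c) *
        \prod_(i < n | i != i0) Gpol n (yv i).
Proof.
under eq_bigr => r _ do rewrite (big_morph polyC (@polyCD _) (@polyC0 _)) mulr_suml.
rewrite exchange_big /=; apply: eq_bigr => i0 _.
pose F (i : 'I_n) (c : 'I_n.+1) :=
  (if i == i0 then (H i c)%:P else 1) * (yv i) ^+ c.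
transitivity (\sum_(r : {ffun 'I_n -> 'I_n.+1}) \prod_(i < n) F i (r i)).
  apply: eq_bigr => r _; rewrite (bigD1 i0) //= [RHS](bigD1 i0) //= /F eqxx mulrA.
  congr (_ * _); apply: eq_bigr => i hi; by rewrite (negbTE hi) mul1r.
rewrite -bigA_distr_bigA (bigD1 i0) //= /F eqxx; congr (_ * _).
apply: eq_bigr => i hi; rewrite (negbTE hi) /Gpol; apply: eq_bigr => c _.
by rewrite mul1r.
Qed.


Section Core.
Variables k l : nat.

Definition cT : rat := - bernoulli (k + l) / (2 * (k + l)%:R) * (kron l 1 + kron k 0).
Definition wf (a t : nat) : {poly rat} := ((a ^ k * t ^ (l - 1))%N)%:R.
Definition Wsum n : {poly rat} := \sum_(i < n) Wpol n (wf i.+1) (yv i).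
Definition Qn n : {poly rat} := \prod_(i < n) Gpol n (yv i).
Definition Ecore (j : nat) : rat :=
  if j is 0 then cT else \sum_(1 <= m < j.+1 | (m %| j)%N) ((m ^ k * (j %/ m) ^ (l - 1))%N)%:R.

Lemma B_eq n (i : 'I_n) :
  \sum_(c < n.+1) (((i.+1 ^ k)%:R * faulhaber l c)%:P * (yv i) ^+ c) = Spol n (wf i.+1) (yv i).
Proof.
apply: eq_bigr => c _; congr (_ * _).
rewrite /faulhaber -natrM polyC_natr /gS /wf big_distrr /= natr_sum //.
Qed.

Lemma B_cong n (i : 'I_n) :
  eqN n (Spol n (wf i.+1) (yv i)) (Gpol n (yv i) * Wpol n (wf i.+1) (yv i)).
Proof.
rewrite teleGW /yv -exprM; apply: eqN_sym; apply: eqN_XnM.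
by rewrite mulSn addSn ltnS leq_addr.
Qed.

Lemma sumpart n :
  pgen (fun n (r : {ffun 'I_n -> 'I_n.+1}) => \sum_(i < n) (i.+1 ^ k)%:R * faulhaber l (r i)) n
  = (Wsum n * Qn n)`_n.
Proof.
rewrite pgen_coef (expand (fun (i : 'I_n) (c : nat) => (i.+1 ^ k)%:R * faulhaber l c)).
under eq_bigr => i0 _ do rewrite B_eq.
have h : eqN n (\sum_(i0 < n) Spol n (wf i0.+1) (yv i0) * \prod_(i < n | i != i0) Gpol n (yv i))
   (\sum_(i0 < n) (Gpol n (yv i0) * Wpol n (wf i0.+1) (yv i0)) * \prod_(i < n | i != i0) Gpol n (yv i)).
  refine (eqN_sum _ _) => i0 _; apply: eqN_mul => //; apply: B_cong.
rewrite h //.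
rewrite /Wsum /Qn mulr_suml; congr (_ `_ _).
under eq_bigr => i0 _ do rewrite (mulrC (Gpol _ _)) -mulrA -(bigD1 i0 (P:=xpredT) (F:=fun i => Gpol n (yv i))) //.
by [].
Qed.
End Core.


Lemma coefWt k l n a j :
  (Wpol n (wf k l a) ('X ^+ a))`_j =
  \sum_(1 <= t < n.+1) ((a ^ k * t ^ (l - 1))%N)%:R * (j == a * t)%N%:R.
Proof.
rewrite /Wpol coef_sum; apply: eq_bigr => t _.
by rewrite /wf -polyC_natr coefCM -exprM coefXn.
Qed.

Lemma Wsum_coef k l n j : (1 <= j <= n)%N ->
  (Wsum k l n)`_j = Ecore k l j.
Proof.
move=> hj; rewrite /Wsum coef_sum.
under eq_bigr => i _ do rewrite coefWt.
have -> : Ecore k l j = dsum n j (fun m t => ((m ^ k * t ^ (l - 1))%N)%:R).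
  rewrite dsumE //; case: j hj => //.
rewrite /dsum -(big_mkord xpredT (fun i => \sum_(1 <= t < n.+1)
   ((i.+1 ^ k * t ^ (l - 1))%N)%:R * (j == i.+1 * t)%N%:R)).
by rewrite big_add1.
Qed.

Lemma Wsum_coef0 k l n : (Wsum k l n)`_0 = 0.
Proof.
rewrite /Wsum coef_sum big1 // => i _; rewrite coefWt big1_seq // => t.
rewrite mem_index_iota; case: t => [|t] // _.
by rewrite eq_sym muln_eq0 /= mulr0.
Qed.

Lemma P0 : pgen (fun _ _ => 1) 0 = 1.
Proof.
rewrite /pgen (eq_bigl xpredT); last by move=> r; rewrite /is_part big_ord0.
by rewrite sumr_const card_ffun !card_ord.
Qed.

Lemma core k l n : pgen (Tkl k l) n = smul (pgen (fun _ _ => 1)) (Ecore k l) n.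
Proof.
have -> : pgen (Tkl k l) n = pgen (fun _ _ => 1) n * Ecore k l 0 +
   pgen (fun n (r : {ffun 'I_n -> 'I_n.+1}) => \sum_(i < n) (i.+1 ^ k)%:R * faulhaber l (r i)) n.
  rewrite /pgen /Tkl big_split /= -/(cT k l); congr (_ + _).
  by rewrite mulr_suml; apply: eq_bigr => r _; rewrite mul1r.
rewrite sumpart /smul big_ord_recr /= subnn.
rewrite addrC; congr (_ + _).
rewrite mulrC coefM big_ord_recr /= subnn Wsum_coef0 mulr0 addr0.
apply: eq_bigr => i _.
rewrite P_coef (Q_trunc (j:=i) (n:=n)) //; last by apply: ltnW.
rewrite Wsum_coef //; apply/andP; split; [rewrite subn_gt0 // | rewrite leq_subr //].
Qed.


Lemma final_gen k l (E : series) n : (forall j, Ecore k l j = E j) ->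
  qbracket (Tkl k l) n = E n.
Proof.
move=> hE.
set P := pgen (fun _ _ => 1).
have h1 : eqN n (PolyN n (pgen (Tkl k l))) (PolyN n P * PolyN n E).
  move=> j hj; rewrite coef_poly ltnS hj core -smul_coef //.
  by apply: smul_ext.
have h2 : eqN n (PolyN n P * PolyN n (sinv P)) 1.
  move=> j hj; rewrite -smul_coef // smul_sinv ?coef1 //.
  by rewrite /P P0 oner_neq0.
rewrite /qbracket (smul_coef _ _ (leqnn n)).
rewrite (eqN_mul h1 (@eqN_refl n (PolyN n (sinv P)))) //.
have -> : PolyN n P * PolyN n E * PolyN n (sinv P) = PolyN n E * (PolyN n P * PolyN n (sinv P)) by ring.
rewrite (eqN_mul (@eqN_refl n (PolyN n E)) (h2)) // mulr1 coef_poly ltnSn //.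
Qed.

Lemma N1 m j k l : (m %| j)%N -> (l <= k)%N -> (1 <= l)%N ->
  (m ^ k * (j %/ m) ^ (l - 1) = j ^ (l - 1) * m ^ (k - l + 2 - 1))%N.
Proof.
move=> hm hlk hl; rewrite -{2}(divnK hm).
have -> : k = ((k - l + 2 - 1) + (l - 1))%N by lia.
rewrite expnMn expnD.
have -> : (k - l + 2 - 1 + (l - 1) - l + 2 - 1 = k - l + 2 - 1)%N by lia.
ring.
Qed.

Lemma N2 d j k l : (d %| j)%N -> (k < l)%N ->
  ((j %/ d) ^ k * d ^ (l - 1) = j ^ k * d ^ (l - k - 1))%N.
Proof.
move=> hm hlk; rewrite -{2}(divnK hm).
have -> : (l - 1 = k + (l - k - 1))%N by lia.
rewrite expnMn expnD.
ring.
Qed.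

Lemma case1 k l j : (1 <= l)%N -> ~~ odd (k + l) -> (l <= k)%N ->
  Ecore k l j = Dpow (l - 1) (eisenstein (k - l + 2)) j.
Proof.
move=> hl hodd hlk; case: j => [|j].
  rewrite /Ecore /Dpow /eisenstein /cT /kron.
  case: (ltngtP l 1) => [|hgt|e]; first by lia.
    have -> : (k == 0%N) = false by apply/eqP; lia.
    rewrite exp0n; last by lia.
    by rewrite addr0 !mul0r mulr0.
  subst l.
  have -> : (k == 0%N) = false by apply/eqP => e; subst k.
  have -> : (k - 1 + 2 = k + 1)%N by lia.
  rewrite subnn expn0 addr0 mul1r mulr1. reflexivity.
rewrite /Ecore /Dpow /eisenstein natr_sum mulr_sumr; apply: eq_bigr => m hm.
by rewrite -natrM N1.
Qed.

Lemma case2 k l j : (1 <= l)%N -> ~~ odd (k + l) -> (k < l)%N ->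
  Ecore k l j = Dpow k (eisenstein (l - k)) j.
Proof.
move=> hl hodd hlk; case: j => [|j].
  rewrite /Ecore /Dpow /eisenstein /cT /kron.
  case: k hodd hlk => [|k] hodd hlk.
    have -> : (l == 1%N) = false by apply/eqP => e; subst l.
    by rewrite expn0 mul1r add0n subn0 add0r mulr1.
  have -> : (l == 1%N) = false by apply/eqP; lia.
  by rewrite exp0n // addr0 !mul0r mulr0.
rewrite /Ecore /Dpow /eisenstein.
have -> : (\sum_(1 <= m < j.+2 | (m %| j.+1)%N) ((m ^ k * (j.+1 %/ m) ^ (l - 1))%N)%:R : rat)
   = dsum j.+1 j.+1 (fun m t => ((m ^ k * t ^ (l - 1))%N)%:R) by rewrite dsumE // leqnn.
rewrite dsum_swap dsumE ?leqnn // natr_sum mulr_sumr; apply: eq_bigr => m hm.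
by rewrite -natrM N2 // subnDA.
Qed.

Theorem proposition3p1p2 (k l : nat) :
  (1 <= l)%N -> ~~ odd (k + l) ->
  (forall n : nat,
     (l <= k)%N -> qbracket (Tkl k l) n = Dpow (l - 1) (eisenstein (k - l + 2)) n) /\
  (forall n : nat,
     (k < l)%N -> qbracket (Tkl k l) n = Dpow k (eisenstein (l - k)) n).
Proof.
move=> hl hodd; split => n hlk; apply: final_gen => j.
  exact: case1.
exact: case2.
Qed.
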